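(* Let $G_{n,d}$ be a uniformly random $d$-regular graph on $[n]$ ($dn$ even) and let $\{a_i,b_i\}$, $i=1,\dots,k$, be distinct pairs of distinct vertices with $k\le n/(8d)$. Then, for $n$ sufficiently large, $$\mathbb P\big(\{a_i,b_i\}\in E(G_{n,d})\text{ for all }1\le i\le k\big)\le\left(\frac{20d}{n}\right)^{k}.$$ *)

(* Defs.v *)
From HB Require Import structures.
From mathcomp Require Import all_boot all_order all_algebra.
Set Implicit Arguments. Unset Strict Implicit. Unset Printing Implicit Defensive.
Import Order.TTheory GRing.Theory Num.Theory.

(* A (simple) graph on vertex set [n] = 'I_n is given by its edge set:
   a set of 2-element subsets of 'I_n. *)
Definition is_simple_graph (n : nat) (E : {set {set 'I_n}}) : bool :=
  [forall e in E, #|e| == 2].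

Definition is_regular (n d : nat) (E : {set {set 'I_n}}) : bool :=
  is_simple_graph E && [forall v : 'I_n, #|[set e in E | v \in e]| == d].

Definition regular_graphs (n d : nat) : {set {set {set 'I_n}}} :=
  [set E | is_regular d E].

Arguments regular_graphs : clear implicits.
Definition prob_Gnd (n d : nat) (A : pred {set {set 'I_n}}) : rat :=
  (#|[set E in regular_graphs n d | A E]|%:R / #|regular_graphs n d|%:R)%R.
Arguments prob_Gnd : clear implicits.

(* Main.v *)
Require Import Defs.
From HB Require Import structures.
From mathcomp Require Import all_boot all_order all_algebra.
Import Order.TTheory GRing.Theory Num.Theory.
Set Implicit Arguments. Unset Strict Implicit. Unset Printing Implicit Defensive.
From mathcomp Require Import zify.

Lemma set2_eq (T : finType) (x y u v : T) :
  [set x; y] = [set u; v] -> (x = u /\ y = v) \/ (x = v /\ y = u).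
Proof.
move=> E.
have hx : x \in [set u; v] by rewrite -E set21.
have hy : y \in [set u; v] by rewrite -E set22.
have hu : u \in [set x; y] by rewrite E set21.
have hv : v \in [set x; y] by rewrite E set22.
move: hx hy hu hv; rewrite !in_set2.
case/orP=> /eqP hx; subst x.
- case/orP=> /eqP hy; subst y; last by left.
  by move=> _ /orP [] /eqP ->; left.
- case/orP=> /eqP hy; subst y; first by right.
  by move=> /orP [] /eqP -> _; [right|left].
Qed.

Lemma set2_inj_r (T : finType) (x y y' : T) : [set x; y] = [set x; y'] -> y = y'.
Proof.
case/set2_eq=> [[_ ->] //| [Hx Hy]]; by rewrite Hy Hx.
Qed.

Lemma cardsU1I (T : finType) (e : T) (H C : {set T}) :
  #|(e |: H) :&: C| = ((e \in C) && (e \notin H)) + #|H :&: C|.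
Proof.
rewrite setIUl; case eC: (e \in C) => /=.
  have -> : [set e] :&: C = [set e].
    by apply/setIidPl; rewrite sub1set.
  by rewrite cardsU1 inE eC andbT.
have -> : [set e] :&: C = set0.
  by apply/setP=> z; rewrite !inE; apply/negbTE; apply/andP=> [[/eqP -> ]]; rewrite eC.
by rewrite set0U.
Qed.

Lemma cardsD1I (T : finType) (e : T) (H C : {set T}) :
  #|(H :\ e) :&: C| + ((e \in C) && (e \in H)) = #|H :&: C|.
Proof.
have -> : (H :\ e) :&: C = (H :&: C) :\ e.
  by apply/setP=> z; rewrite !inE; case: (z == e); case: (z \in H); case: (z \in C).
by rewrite [RHS](cardsD1 e) inE addnC andbC.
Qed.

Lemma reg_simple n d (G : {set {set 'I_n}}) e :
  is_regular d G -> e \in G -> #|e| = 2.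
Proof. by case/andP=> /forall_inP H _ /H /eqP. Qed.

Lemma reg_deg n d (G : {set {set 'I_n}}) v :
  is_regular d G -> #|[set e in G | v \in e]| = d.
Proof. by case/andP=> _ /forallP /(_ v) /eqP. Qed.

Lemma deg_nbr n d (G : {set {set 'I_n}}) v :
  is_regular d G -> #|[set y | [set v; y] \in G]| = d.
Proof.
move=> R; rewrite -(reg_deg v R).
have -> : [set e in G | v \in e] = (fun y => [set v; y]) @: [set y | [set v; y] \in G].
  apply/setP=> e; rewrite inE; apply/andP/imsetP.
  - move=> [eG ve]; have /eqP/cards2P [x [y [xy E]]] := reg_simple R eG.
    move: eG ve; rewrite E in_set2 => eG /orP [] /eqP ->.
    + by exists y; rewrite ?inE.
    + by exists x; rewrite ?inE setUC.
  - by move=> [y]; rewrite inE => yG ->; rewrite yG set21.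
rewrite card_in_imset //; move=> y1 y2 _ _; exact: set2_inj_r.
Qed.

Lemma card_pairs1 n d (G : {set {set 'I_n}}) (Q : pred 'I_n) :
  is_regular d G ->
  #|[set p : 'I_n * 'I_n | ([set p.1; p.2] \in G) && Q p.1]| = d * #|[set x | Q x]|.
Proof.
move=> R.
transitivity (\sum_(p : 'I_n * 'I_n | Q p.1 && ([set p.1; p.2] \in G)) 1).
  by rewrite sum1dep_card; apply: eq_card => p; rewrite !inE andbC.
rewrite -(pair_big_dep Q (fun i j => [set i; j] \in G) (fun _ _ => 1)) /=.
rewrite (eq_bigr (fun _ => d)); last by move=> i _; rewrite sum1dep_card (deg_nbr _ R).
by rewrite sum_nat_const cardsE mulnC.
Qed.

Lemma card_pairs2 n d (G : {set {set 'I_n}}) (Q : pred 'I_n) :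
  is_regular d G ->
  #|[set p : 'I_n * 'I_n | ([set p.1; p.2] \in G) && Q p.2]| = d * #|[set x | Q x]|.
Proof.
move=> R; rewrite -(card_pairs1 Q R).
have -> : [set p : 'I_n * 'I_n | ([set p.1; p.2] \in G) && Q p.2] =
  (fun p : 'I_n * 'I_n => (p.2, p.1)) @: [set p : 'I_n * 'I_n | ([set p.1; p.2] \in G) && Q p.1].
  apply/setP=> [[x y]]; rewrite inE /=; apply/idP/imsetP.
  - by move=> H; exists (y, x); rewrite // inE /= setUC.
  - by move=> [[u v]]; rewrite inE /= => H [-> ->]; rewrite setUC.
apply: card_imset => [[x y] [u v]] /= [-> ->] //.
Qed.

Lemma card_pairsS n (S : {set {set 'I_n}}) :
  #|[set p : 'I_n * 'I_n | [set p.1; p.2] \in S]| <= 2 * #|S|.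
Proof.
pose f := fun p : 'I_n * 'I_n => ([set p.1; p.2], (p.1 < p.2)%N).
rewrite -(card_in_imset (f := f)); last first.
  move=> [x y] [u v] _ _ [] /= E F.
  case: (set2_eq E) => [[-> ->] //| [ex ey]]; subst x y.
  move: F; by case: (ltngtP u v) => // /val_inj ->.
rewrite mulnC -(card_bool) -cardsT -cardsX.
apply: subset_leq_card; apply/subsetP=> z /imsetP [[x y]]; rewrite inE => H ->.
by rewrite inE /= H inE.
Qed.

Definition sw n (a b : 'I_n) (G : {set {set 'I_n}}) (x y : 'I_n) :=
  [set a; x] |: ([set b; y] |: ((G :\ [set a; b]) :\ [set x; y])).

Definition good n (a b : 'I_n) (S G : {set {set 'I_n}}) : {set 'I_n * 'I_n} :=
  [set p : 'I_n * 'I_n | [&& [set p.1; p.2] \in G, p.1 \notin [set a; b],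
     p.2 \notin [set a; b], [set p.1; p.2] \notin S, [set a; p.1] \notin G
     & [set b; p.2] \notin G]].

Lemma set2_neq (T : finType) (x y : T) : #|[set x; y]| = 2 -> x != y.
Proof. by apply: contra_eqN => /eqP ->; rewrite setUid cards1. Qed.

Lemma good_facts n d (a b : 'I_n) S G x y :
  is_regular d G -> (x, y) \in good a b S G ->
  [/\ [set x; y] \in G, x != a, x != b, y != a &
   [/\ y != b, x != y, [set x; y] \notin S, [set a; x] \notin G & [set b; y] \notin G]].
Proof.
move=> R; rewrite inE /= => /and5P [H1 H2 H3 H4 /andP [H5 H6]].
move: H2 H3; rewrite !in_set2 !negb_or => /andP [-> ->] /andP [-> ->].
by split=> //; split=> //; apply: set2_neq; exact: (reg_simple R H1).
Qed.

Lemma sw_mem n (a b : 'I_n) G x y e :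
  e \in sw a b G x y =
  [|| e == [set a; x], e == [set b; y] | [&& e != [set x; y], e != [set a; b] & e \in G]].
Proof. by rewrite /sw !in_setU1 !in_setD1. Qed.

Lemma sw_reg n d (a b : 'I_n) S G x y :
  is_regular d G -> a != b -> [set a; b] \in G -> (x, y) \in good a b S G ->
  is_regular d (sw a b G x y).
Proof.
move=> R ab abG gd; have [xyG xa xb ya [yb xy xyS axG byG]] := good_facts R gd.
have ax_by : [set a; x] != [set b; y].
  by apply/eqP => /set2_eq [[/eqP] | [/eqP]]; rewrite ?(negbTE ab) // eq_sym (negbTE ya).
have xy_ab : [set x; y] != [set a; b].
  by apply/eqP => /set2_eq [[/eqP] | [/eqP]]; rewrite ?(negbTE xa) ?(negbTE xb).
apply/andP; split.
- apply/forall_inP => e; rewrite sw_mem => /or3P [] .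
  + by move/eqP ->; rewrite cards2 (eq_sym a x) xa.
  + by move/eqP ->; rewrite cards2 (eq_sym b y) yb.
  + by move=> /and3P [_ _ eG]; rewrite (reg_simple R eG).
- apply/forallP => v; apply/eqP.
  rewrite setIdE /sw !cardsU1I.
  rewrite -(reg_deg v R) setIdE -(cardsD1I [set a; b] G) -(cardsD1I [set x; y] (G :\ [set a; b])).
  rewrite !in_setU1 !in_setD1 (negbTE ax_by) (negbTE axG) (negbTE byG) xy_ab xyG abG !andbF !orbF /=.
  rewrite !inE !andbT.
  rewrite addnA addnC -addnA; congr (_ + _).
  have ba : (b == a) = false by rewrite eq_sym (negbTE ab).
  have ax : (a == x) = false by rewrite eq_sym (negbTE xa).
  have bx : (b == x) = false by rewrite eq_sym (negbTE xb).
  have ay : (a == y) = false by rewrite eq_sym (negbTE ya).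
  have by_ : (b == y) = false by rewrite eq_sym (negbTE yb).
  have yx : (y == x) = false by rewrite eq_sym (negbTE xy).
  have [->|va] := eqVneq v a; first by rewrite ?eqxx ?(negbTE ab) ?ax ?ay.
  have [->|vb] := eqVneq v b; first by rewrite ?eqxx ?ba ?bx ?by_.
  have [->|vx] := eqVneq v x; first by rewrite ?eqxx ?(negbTE xa) ?(negbTE xb) ?(negbTE xy).
  by case: (v == y).
Qed.

Lemma sw_S n (a b : 'I_n) (S G : {set {set 'I_n}}) x y :
  S \subset G -> [set a; b] \notin S -> [set x; y] \notin S ->
  S \subset sw a b G x y.
Proof.
move=> SG abS xyS; apply/subsetP => e eS; rewrite sw_mem; apply/or3P; apply: Or33.
apply/and3P; split; last by apply: (subsetP SG).
- by apply: contraNneq xyS => <-.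
- by apply: contraNneq abS => <-.
Qed.

Lemma sw_inj n d d' (a b : 'I_n) (S G G' : {set {set 'I_n}}) x y :
  is_regular d G -> is_regular d' G' ->
  [set a; b] \in G -> [set a; b] \in G' ->
  (x, y) \in good a b S G -> (x, y) \in good a b S G' ->
  sw a b G x y = sw a b G' x y -> G = G'.
Proof.
move=> R R' abG abG' g g' E.
have [xyG _ _ _ [_ _ _ axG byG]] := good_facts R g.
have [xyG' _ _ _ [_ _ _ axG' byG']] := good_facts R' g'.
apply/setP => e.
have [->|eab] := eqVneq e [set a; b]; first by rewrite abG abG'.
have [->|exy] := eqVneq e [set x; y]; first by rewrite xyG xyG'.
have [->|eax] := eqVneq e [set a; x]; first by rewrite (negbTE axG) (negbTE axG').
have [->|eby] := eqVneq e [set b; y]; first by rewrite (negbTE byG) (negbTE byG').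
have := congr1 (fun H : {set {set 'I_n}} => e \in H) E; rewrite /= !sw_mem.
by rewrite (negbTE eax) (negbTE eby) exy eab.
Qed.

Lemma cardU_le (T : finType) (A B : {set T}) : #|A :|: B| <= #|A| + #|B|.
Proof. exact: (leq_card_setU A B).1. Qed.

Lemma card_pred1 (T : finType) (a : T) : #|[set x | x == a]| = 1.
Proof. by rewrite -[RHS](cards1 a); apply: eq_card => z; rewrite !inE. Qed.

Lemma good_lb n d (a b : 'I_n) (S G : {set {set 'I_n}}) :
  is_regular d G ->
  d * n <= #|good a b S G| + (4 * d + 2 * #|S| + 2 * (d * d)).
Proof.
move=> R.
have E2 : #|[set p : 'I_n * 'I_n | ([set p.1; p.2] \in G) && predT p.1]| = d * n.
  by rewrite (card_pairs1 _ R); congr (_ * _); rewrite -[RHS](card_ord n) -cardsT; apply: eq_card => z; rewrite !inE.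
have B1 := card_pairs1 (pred1 a) R; have B2 := card_pairs1 (pred1 b) R.
have B3 := card_pairs2 (pred1 a) R; have B4 := card_pairs2 (pred1 b) R.
have Ba := card_pairs1 (fun x => [set a; x] \in G) R.
have Bb := card_pairs2 (fun y => [set b; y] \in G) R.
rewrite /= (deg_nbr _ R) in Ba; rewrite /= (deg_nbr _ R) in Bb.
rewrite /= !card_pred1 !muln1 in B1 B2 B3 B4.
have BS := card_pairsS S.
rewrite -E2.
set sE := [set p | _ && predT _].
set g := good a b S G.
set s1 := [set p : 'I_n * 'I_n | ([set p.1; p.2] \in G) && pred1 a p.1] in B1.
set s2 := [set p : 'I_n * 'I_n | ([set p.1; p.2] \in G) && pred1 b p.1] in B2.
set s3 := [set p : 'I_n * 'I_n | ([set p.1; p.2] \in G) && pred1 a p.2] in B3.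
set s4 := [set p : 'I_n * 'I_n | ([set p.1; p.2] \in G) && pred1 b p.2] in B4.
set sa := [set p : 'I_n * 'I_n | ([set p.1; p.2] \in G) && ([set a; p.1] \in G)] in Ba.
set sb := [set p : 'I_n * 'I_n | ([set p.1; p.2] \in G) && ([set b; p.2] \in G)] in Bb.
set sS := [set p : 'I_n * 'I_n | [set p.1; p.2] \in S] in BS.
have sub : sE \subset g :|: (s1 :|: (s2 :|: (s3 :|: (s4 :|: (sS :|: (sa :|: sb)))))).
  apply/subsetP => p; rewrite !inE /= andbT => pG.
  rewrite ?in_set2 ?negb_or pG /=.
  case: (p.1 == a); case: (p.1 == b); case: (p.2 == a); case: (p.2 == b);
  case: ([set p.1; p.2] \in S); case: ([set a; p.1] \in G); by case: ([set b; p.2] \in G).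
apply: (leq_trans (subset_leq_card sub)).
apply: (leq_trans (cardU_le _ _)); rewrite leq_add2l.
have h1 := cardU_le s1 (s2 :|: (s3 :|: (s4 :|: (sS :|: (sa :|: sb))))).
have h2 := cardU_le s2 (s3 :|: (s4 :|: (sS :|: (sa :|: sb)))).
have h3 := cardU_le s3 (s4 :|: (sS :|: (sa :|: sb))).
have h4 := cardU_le s4 (sS :|: (sa :|: sb)).
have h5 := cardU_le sS (sa :|: sb).
have h6 := cardU_le sa sb.
rewrite B1 B2 B3 B4 Ba Bb in h1 h2 h3 h4 h6; move: (d * d) h1 h2 h3 h4 h5 h6 BS => D; lia.
Qed.

Lemma card_pairset (T U : finType) (P : T -> pred U) :
  #|[set t : T * U | P t.1 t.2]| = \sum_(x : T) #|[set u | P x u]|.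
Proof.
transitivity (\sum_(t : T * U | predT t.1 && P t.1 t.2) 1).
  by rewrite sum1dep_card.
rewrite -(pair_big_dep predT P (fun _ _ => 1)); apply: eq_bigr => x _.
by rewrite sum1dep_card.
Qed.

Lemma switch_count n d (a b : 'I_n) (S : {set {set 'I_n}}) :
  a != b -> [set a; b] \notin S ->
  #|[set G in [set G in regular_graphs n d | S \subset G] | [set a; b] \in G]| * (d * n)
  <= d * d * #|[set G in regular_graphs n d | S \subset G]|
     + #|[set G in [set G in regular_graphs n d | S \subset G] | [set a; b] \in G]|
       * (4 * d + 2 * #|S| + 2 * (d * d)).
Proof.
move=> ab abS.
set A := [set G in regular_graphs n d | S \subset G].
set A1 := [set G in A | [set a; b] \in G].
set L := 4 * d + 2 * #|S| + 2 * (d * d).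
pose V := [set t : {set {set 'I_n}} * ('I_n * 'I_n) | (t.1 \in A1) && (t.2 \in good a b S t.1)].
pose W := [set t : {set {set 'I_n}} * ('I_n * 'I_n) |
  [&& t.1 \in A, [set a; t.2.1] \in t.1 & [set b; t.2.2] \in t.1]].
have hV : #|A1| * (d * n) <= #|V| + #|A1| * L.
  rewrite /V (card_pairset (fun G p => (G \in A1) && (p \in good a b S G))).
  rewrite -!sum_nat_const big_mkcond [X in _ + X]big_mkcond /= -big_split /=.
  apply: leq_sum => G _.
  case GA1: (G \in A1) => //=.
  have : G \in A1 := GA1.
  rewrite !inE => /andP [/andP [R _] _].
  rewrite (_ : #|[set u | u \in good a b S G]| = #|good a b S G|); last first.
    by apply: eq_card => u; rewrite inE.
  exact: good_lb.
have hW : #|W| <= d * d * #|A|.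
  rewrite /W (card_pairset (fun G p => [&& G \in A, [set a; p.1] \in G & [set b; p.2] \in G])).
  rewrite mulnC -sum_nat_const [X in _ <= X]big_mkcond /=.
  apply: leq_sum => G _.
  case GA: (G \in A) => /=; last first.
    by rewrite (_ : [set u | false] = set0) ?cards0 //; apply/setP=> u; rewrite !inE.
  have : G \in A := GA.
  rewrite !inE => /andP [R _].
  rewrite -{1}(deg_nbr a R) -(deg_nbr b R) -cardsX; apply: eq_leq.
  by apply: eq_card => [[u v]]; rewrite !inE.
pose F := fun t : {set {set 'I_n}} * ('I_n * 'I_n) => (sw a b t.1 t.2.1 t.2.2, t.2).
have hVW : #|V| <= #|W|.
  rewrite -(card_in_imset (f := F)); last first.
    move=> [G [x y]] [G' [x' y']] hG hG' [E ex ey]; subst x' y'.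
    move: hG hG'; rewrite inE /= => /andP [GA1 gG]; rewrite inE /= => /andP [GA1' gG'].
    move: GA1 GA1'; rewrite !inE => /andP [/andP [R _] abG] /andP [/andP [R' _] abG'].
    by rewrite (sw_inj R R' abG abG' gG gG' E).
  apply: subset_leq_card; apply/subsetP => t /imsetP [[G [x y]]].
  rewrite inE /= => /andP [GA1 g] ->.
  move: GA1; rewrite !inE => /andP [/andP [R SG] abG].
  have [_ _ _ _ [_ _ xyS _ _]] := good_facts R g.
  by rewrite /F /= (sw_reg R ab abG g) (sw_S SG abS xyS) !eqxx /= ?orbT.
lia.
Qed.

Lemma step n d k (a b : 'I_n) (S : {set {set 'I_n}}) :
  80 <= n -> 8 * d * k <= n -> #|S| <= k -> a != b -> [set a; b] \notin S ->
  #|[set G in [set G in regular_graphs n d | S \subset G] | [set a; b] \in G]| * n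
  <= 20 * d * #|[set G in regular_graphs n d | S \subset G]|.
Proof.
move=> n80 hk hS ab abS.
have hC := switch_count d ab abS.
move: hC.
set A := [set G in regular_graphs n d | S \subset G].
set A1 := [set G in A | [set a; b] \in G].
move=> hC.
have sub : #|A1| <= #|A|.
  by apply: subset_leq_card; apply/subsetP => G; rewrite inE => /andP [].
case: (posnP d) => [d0 | dpos].
  subst d; suff -> : #|A1| = 0 by [].
  apply/eqP; rewrite cards_eq0; apply/eqP/setP => G; rewrite inE [RHS]inE.
  apply/negbTE/negP => /andP [GA abG]; move: GA; rewrite !inE => /andP [R _].
  have := reg_deg a R; move/eqP; rewrite cards_eq0 => /eqP/setP/(_ [set a; b]).
  by rewrite !inE abG eqxx.
case: (leqP n (20 * d)) => hn.
  by rewrite mulnC; apply: leq_mul.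
move: (#|A1|) (#|A|) hC => X Y hC.
have h1 : 80 * d <= d * n by nia.
have h2 : 40 * (d * d) <= 2 * (d * n).
  nia.
have h3 : 40 * #|S| <= 5 * (d * n).
  nia.
have h4 : 20 * (4 * d + 2 * #|S| + 2 * (d * d)) <= 8 * (d * n) by lia.
have h5 : 12 * (X * (d * n)) <= 20 * (d * d * Y).
  have : 20 * (X * (d * n)) <= 20 * (d * d * Y) + X * (20 * (4 * d + 2 * #|S| + 2 * (d * d))).
    by move: hC; nia.
  have : X * (20 * (4 * d + 2 * #|S| + 2 * (d * d))) <= X * (8 * (d * n)) by rewrite leq_mul2l h4 orbT.
  lia.
have h6 : 12 * (X * n) <= 20 * (d * Y).
  rewrite -(leq_pmul2l dpos); move: h5; rewrite !mulnA.
  have -> : d * 12 * X * n = 12 * X * d * n by lia.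
  have -> : d * 20 * d * Y = 20 * d * d * Y by lia.
  by [].
lia.
Qed.

Lemma chain n d k (a b : 'I_k -> 'I_n) :
  80 <= n -> (forall i, a i != b i) ->
  injective (fun i => [set a i; b i]) -> 8 * d * k <= n ->
  forall j, j <= k ->
  #|[set G in regular_graphs n d |
      [set [set a i; b i] | i : 'I_k & (i < j)%N] \subset G]| * n ^ j
  <= (20 * d) ^ j * #|regular_graphs n d|.
Proof.
move=> n80 ab inj hk; elim=> [|j IH] hj.
  rewrite !expn0 mul1n muln1; apply: subset_leq_card; apply/subsetP => G.
  by rewrite inE => /andP [].
have jk : j < k := hj.
pose i0 : 'I_k := Ordinal jk.
set Sj := [set [set a i; b i] | i : 'I_k & (i < j)%N].
have ES : [set [set a i; b i] | i : 'I_k & (i < j.+1)%N] = [set a i0; b i0] |: Sj.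
  apply/setP => e; rewrite in_setU1; apply/imsetP/idP.
  - move=> [i]; rewrite inE ltnS leq_eqVlt => /orP [/eqP hi | hi] ->.
      by rewrite (_ : i = i0) ?eqxx //; apply: val_inj.
    by apply/orP; right; apply/imsetP; exists i; rewrite ?inE.
  - case/orP => [/eqP -> | /imsetP [i]]; first by exists i0; rewrite ?inE /=.
    by rewrite inE => hi ->; exists i; rewrite // inE ltnS ltnW.
have hS : #|Sj| <= k.
  by apply: (leq_trans (leq_imset_card _ _)); rewrite -[X in _ <= X](card_ord k) max_card.
have abS : [set a i0; b i0] \notin Sj.
  apply/imsetP => [[i]]; rewrite inE => hi /inj E.
  by move: hi; rewrite -E /= ltnn.
have hstep := step n80 hk hS (ab i0) abS.
have EA : [set G in regular_graphs n d | [set a i0; b i0] |: Sj \subset G] =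
          [set G in [set G in regular_graphs n d | Sj \subset G] | [set a i0; b i0] \in G].
  by apply/setP => G; rewrite !inE subUset sub1set andbA andbC andbA [_ && is_regular _ _]andbC.
rewrite ES EA !expnS.
have IH' := IH (ltnW jk).
move: hstep IH'.
move: (n ^ j) ((20 * d) ^ j) => P Q.
move: (#|_|) => X. move: (#|[set G in regular_graphs n d | Sj \subset G]|) => Y.
move: (#|regular_graphs n d|) => Z.
move=> h1 h2.
have h3 := leq_mul h1 (leqnn P).
have h4 := leq_mul (leqnn (20 * d)) h2.
rewrite !mulnA in h3 h4 *.
apply: (leq_trans _ (leq_trans h3 _)).
  by rewrite -mulnA (mulnC n P) mulnA.
by apply: (leq_trans _ (leq_trans h4 _)); rewrite -?mulnA ?leqnn.
Qed.

Theorem mainTheorem7 :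
  exists N : nat, forall (n d k : nat) (a b : 'I_k -> 'I_n),
    (N <= n)%N ->
    ~~ odd (d * n) ->
    (forall i, a i != b i) ->
    injective (fun i => [set a i; b i]) ->
    (8 * d * k <= n)%N ->
    (prob_Gnd n d (fun E => [forall i, [set a i; b i] \in E])
       <= ((20 * d)%:R / n%:R) ^+ k)%R.
Proof.
exists 80 => n d k a b n80 _ ab inj hk.
have C := chain n80 ab inj hk (leqnn k).
set X := #|[set G in regular_graphs n d | [forall i, [set a i; b i] \in G]]|.
have EX : #|[set G in regular_graphs n d |
      [set [set a i; b i] | i : 'I_k & (i < k)%N] \subset G]| = X.
  apply: eq_card => G; rewrite !inE; congr (_ && _).
  apply/subsetP/forallP => [H i | H e /imsetP [i _ ->]]; last exact: H.
  by apply: H; apply/imsetP; exists i; rewrite ?inE.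
rewrite EX in C.
rewrite /prob_Gnd -/X.
set Y := #|regular_graphs n d|.
have Xn : (X <= Y)%N.
  by apply: subset_leq_card; apply/subsetP => G; rewrite inE => /andP [].
have ge0 : (0 <= ((20 * d)%:R / n%:R : rat) ^+ k)%R.
  by apply: exprn_ge0; apply: divr_ge0; apply: ler0n.
case: (posnP Y) => [Y0 | Ypos].
  by rewrite Y0 invr0 mulr0.
have npos : (0 < n)%N by apply: leq_trans n80.
rewrite expr_div_n ler_pdivrMr ?ltr0n //.
have hq : (0 < (n%:R : rat) ^+ k)%R by rewrite -natrX ltr0n expn_gt0 npos.
rewrite mulrAC ler_pdivlMr //.
by rewrite -!natrX -!natrM ler_nat.
Qed.
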